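(* Consider an $N_r\times N_t$ MIMO setting with constellations $\mathcal{A}_0,\dots,\mathcal{A}_{N_t-1}$ and the associated pseudo-Boolean function $f(z_0,\dots,z_{N-1})=\sum_{S}\bar d_S\prod_{n\in S}z_n$ defined in the context. Let $S\subseteq\{0,\dots,N-1\}$ and suppose there is an antenna index $k$ such that, writing $S_k=S\cap\mathcal{N}_k$, the points $a^{(k)}_{t}\in\mathcal{A}_k$ whose local $N_k$-bit labels $[t]_2$ have bit $0$ at every local position corresponding to $\mathcal{N}_k\setminus S_k$ form a family of rectangles in $\mathbb{C}$ (each with four of these points as vertices, together covering all of them) such that no two rectangles share a vertex, and in each rectangle the local labels of one diagonal pair both contain an odd number of $0$s while those of the other diagonal pair both contain an even number of $0$s. Then $\bar d_S=0$ for all $\mathbf{y}\in\mathbb{C}^{N_r}$ and $\mathbf{H}\in\mathbb{C}^{N_r\times N_t}$.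
   Context: For $k=0,\dots,N_t-1$, $\mathcal{A}_k=\{a^{(k)}_0,\dots,a^{(k)}_{M_k-1}\}\subset\mathbb{C}$ with $M_k=2^{N_k}$; the local label of $a^{(k)}_t$ is the $N_k$-bit binary representation $[t]_2$ (most significant bit first). Let $N=\sum_k N_k$ and $\mathcal{N}_k=\{\sum_{l<k}N_l,\dots,\sum_{l\le k}N_l-1\}$. A joint index $i\in\{0,\dots,2^N-1\}$ corresponds to a tuple $(i_0,\dots,i_{N_t-1})$ via concatenation of binary representations: the $N$-bit representation $b_0(i)\cdots b_{N-1}(i)$ of $i$ equals $[i_0]_2[i_1]_2\cdots[i_{N_t-1}]_2$, so bits at positions $\mathcal{N}_k$ form $[i_k]_2$. Given received vector $\mathbf{y}=(y_0,\dots,y_{N_r-1})$ and channel matrix $\mathbf{H}=(h_{l,k})$, set $d_{l,i}=\big|y_l-\sum_{k}h_{l,k}a^{(k)}_{i_k}\big|^2$ and $f(z_0,\dots,z_{N-1})=\sum_{l=0}^{N_r-1}\sum_{i}d_{l,i}\prod_{n=0}^{N-1}B_{i,n}(z_n)$, $z_n\in\{0,1\}$, where $B_{i,n}(z)=z$ if $b_n(i)=1$ and $1-z$ if $b_n(i)=0$. Its multilinear expansion is $f=\sum_{S\subseteq\{0,\dots,N-1\}}\bar d_S\prod_{n\in S}z_n$, with $\bar d_S=\sum_{l}\sum_{i:\,b_n(i)=0\ \forall n\notin S}d_{l,i}\prod_{n\in S}(-1)^{1-b_n(i)}$. *)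

(* Defs.v *)
From HB Require Import structures.
From mathcomp Require Import all_boot all_order all_algebra.
From mathcomp Require Import complex.
From mathcomp Require Import reals.
Set Implicit Arguments. Unset Strict Implicit. Unset Printing Implicit Defensive.
Import Order.TTheory GRing.Theory Num.Theory.
Local Open Scope ring_scope.

Section MIMO.
Variable Nt : nat.
(* Nk k = N_k : number of bits labelling constellation A_k, M_k = 2^(N_k) *)
Variable Nk : 'I_Nt -> nat.

Definition Ntot : nat := (\sum_(k < Nt) Nk k)%N.

(* offset of block N_k: sum_{l<k} N_l ; N_k = {off k, ..., off k + Nk k - 1} *)
Definition off (k : 'I_Nt) : nat := (\sum_(l < Nt | (l < k)%N) Nk l)%N.

(* n-th bit (most significant first) of the m-bit representation of t *)
Definition bitm (m t n : nat) : bool := odd (t %/ 2 ^ (m - n.+1)).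

Definition gbit (i n : nat) : bool := bitm Ntot i n.

(* local index i_k of joint index i: the bits of i at positions N_k *)
Definition loc (k : 'I_Nt) (i : nat) : nat :=
  ((i %/ 2 ^ (Ntot - (off k + Nk k))) %% 2 ^ (Nk k))%N.

Definition inS (S : {set 'I_Ntot}) (p : nat) : bool :=
  [exists n : 'I_Ntot, (n \in S) && (nat_of_ord n == p)].

Definition nzeros (m t : nat) : nat := count (fun j => ~~ bitm m t j) (iota 0 m).

Variable R : realType.
Notation C := R[i].

(* A k t = a^{(k)}_t  (only t < 2^(Nk k) is relevant) *)
Variable A : 'I_Nt -> nat -> C.

Definition dli (Nr : nat) (y : 'I_Nr -> C) (H : 'M[C]_(Nr, Nt)) (l : 'I_Nr) (i : nat) : C :=
  `| y l - \sum_(k < Nt) H l k * A k (loc k i) | ^+ 2.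

Definition dbar (Nr : nat) (y : 'I_Nr -> C) (H : 'M[C]_(Nr, Nt)) (S : {set 'I_Ntot}) : C :=
  \sum_(l < Nr) \sum_(i < 2 ^ Ntot | [forall n : 'I_Ntot, (n \notin S) ==> ~~ gbit i n])
     dli y H l i * \prod_(n in S) (-1) ^+ (1 - gbit i n).

Definition Pk (S : {set 'I_Ntot}) (k : 'I_Nt) (t : nat) : bool :=
  [forall j : 'I_(Nk k), ~~ inS S (off k + j) ==> ~~ bitm (Nk k) t j].

Definition Plist (S : {set 'I_Ntot}) (k : 'I_Nt) : seq nat :=
  [seq t <- iota 0 (2 ^ Nk k) | Pk S k t].

(* a1 a2 a3 a4 (in cyclic order) are the vertices of a rectangle:
   a parallelogram with a right angle at a2. *)
Definition is_rectangle (a1 a2 a3 a4 : C) : Prop :=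
  a1 - a2 = a4 - a3 /\ 'Re ((a1 - a2) * (a3 - a2)^*) = 0.

Definition quad_verts (q : nat * nat * nat * nat) : seq nat :=
  let: (t1, t2, t3, t4) := q in [:: t1; t2; t3; t4].

Definition rect_cond (S : {set 'I_Ntot}) (k : 'I_Nt) : Prop :=
  exists rects : seq (nat * nat * nat * nat),
    [/\ perm_eq (flatten (map quad_verts rects)) (Plist S k),
        uniq (map (A k) (flatten (map quad_verts rects))) &
        forall q, q \in rects ->
          let: (t1, t2, t3, t4) := q in
          [/\ is_rectangle (A k t1) (A k t2) (A k t3) (A k t4),
              odd (nzeros (Nk k) t1), odd (nzeros (Nk k) t3),
              ~~ odd (nzeros (Nk k) t2) & ~~ odd (nzeros (Nk k) t4)]].

End MIMO.

(* Main.v *)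
Require Import Defs.
From HB Require Import structures.
From mathcomp Require Import all_boot all_order all_algebra.
From mathcomp Require Import complex.
From mathcomp Require Import reals.
From mathcomp Require Import zify ring.
Import Order.TTheory GRing.Theory Num.Theory.
Set Implicit Arguments. Unset Strict Implicit. Unset Printing Implicit Defensive.

Lemma L1 X Y m e : Y < 2 ^ m -> m <= e -> (X * 2 ^ m + Y) %/ 2 ^ e = X %/ 2 ^ (e - m).
Proof.
move=> hY hme; rewrite -(subnKC hme) expnD divnMA divnMDl ?expn_gt0 //.
by rewrite (divn_small hY) addn0 addKn.
Qed.

Lemma L2 X Y m e : e < m -> odd ((X * 2 ^ m + Y) %/ 2 ^ e) = odd (Y %/ 2 ^ e).
Proof.
move=> hem; have he : m = (m - e) + e by rewrite subnK // ltnW.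
rewrite he expnD mulnA divnMDl ?expn_gt0 // oddD oddM.
have -> : odd (2 ^ (m - e)) = false by rewrite oddX /=; case: (m - e) (subn_gt0 e m) => //; rewrite hem.
by rewrite andbF.
Qed.

Lemma L3 X Y m e w : e + w <= m -> (X * 2 ^ m + Y) %/ 2 ^ e %% 2 ^ w = Y %/ 2 ^ e %% 2 ^ w.
Proof.
move=> hem; have he : m = ((m - e - w) + w) + e by lia.
rewrite he expnD mulnA divnMDl ?expn_gt0 // expnD mulnA modnMDl //.
Qed.

Lemma Lb t lo P Q : t < P -> lo < Q -> t * Q + lo < P * Q.
Proof. move=> ht hl; nia. Qed.

Lemma offS Nt (Nk : 'I_Nt -> nat) (k : 'I_Nt) :
  \sum_(l < Nt | l < k.+1) Nk l = off Nk k + Nk k.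
Proof.
rewrite (bigD1 k) //= addnC; congr (_ + _); apply: eq_bigl => l /=.
by rewrite ltnS ltn_neqAle andbC.
Qed.

Lemma off_mono Nt (Nk : 'I_Nt -> nat) (k1 k2 : 'I_Nt) :
  k1 < k2 -> off Nk k1 + Nk k1 <= off Nk k2.
Proof.
move=> h; rewrite -offS /off; apply: (sub_le_big leqnn (fun x y => leq_addr y x)) => l /= hl.
exact: leq_trans hl h.
Qed.

Lemma off_tot Nt (Nk : 'I_Nt -> nat) (k : 'I_Nt) : off Nk k + Nk k <= Ntot Nk.
Proof.
rewrite -offS /Ntot; exact: (sub_le_big leqnn (fun x y => leq_addr y x)).
Qed.

Definition aa Nt (Nk : 'I_Nt -> nat) k := Ntot Nk - (off Nk k + Nk k).
Definition gi Nt (Nk : 'I_Nt -> nat) k u t lo :=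
  u * 2 ^ (Nk k + aa Nk k) + (t * 2 ^ (aa Nk k) + lo).

Lemma gi_bound Nt (Nk : 'I_Nt -> nat) k t lo :
  t < 2 ^ Nk k -> lo < 2 ^ aa Nk k -> t * 2 ^ (aa Nk k) + lo < 2 ^ (Nk k + aa Nk k).
Proof. by move=> ht hl; rewrite expnD; apply: Lb. Qed.

Lemma loc_self Nt (Nk : 'I_Nt -> nat) k u t lo :
  t < 2 ^ Nk k -> lo < 2 ^ aa Nk k -> loc Nk k (gi Nk k u t lo) = t.
Proof.
move=> ht hl; rewrite /loc -/(aa Nk k) /gi L3; last by rewrite addnC.
by rewrite L1 // subnn expn0 divn1 modn_small.
Qed.

Lemma loc_other Nt (Nk : 'I_Nt -> nat) k k' u t lo :
  k' != k -> t < 2 ^ Nk k -> lo < 2 ^ aa Nk k ->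
  loc Nk k' (gi Nk k u t lo) = loc Nk k' (gi Nk k u 0 lo).
Proof.
move=> hne ht hl; have h0 : 0 < 2 ^ Nk k by rewrite expn_gt0.
have hk := off_tot Nk k; have hk' := off_tot Nk k'.
have b1 := gi_bound ht hl; have b0 := gi_bound h0 hl.
rewrite /loc /gi.
case: (ltngtP k' k) => hkk; last by move/val_inj: hkk => e; rewrite e eqxx in hne.
- have hm := off_mono Nk hkk.
  have he : Nk k + aa Nk k <= Ntot Nk - (off Nk k' + Nk k') by rewrite /aa; lia.
  by rewrite !L1.
- have hm := off_mono Nk hkk.
  have he : Ntot Nk - (off Nk k' + Nk k') + Nk k' <= aa Nk k by rewrite /aa; lia.
  have he2 : Ntot Nk - (off Nk k' + Nk k') + Nk k' <= Nk k + aa Nk k by lia.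
  by rewrite !L3.
Qed.

Lemma gbit_out Nt (Nk : 'I_Nt -> nat) k u t lo n : n < Ntot Nk ->
  ~~ ((off Nk k <= n) && (n < off Nk k + Nk k)) -> t < 2 ^ Nk k -> lo < 2 ^ aa Nk k ->
  gbit Nk (gi Nk k u t lo) n = gbit Nk (gi Nk k u 0 lo) n.
Proof.
move=> hN hn ht hl; have h0 : 0 < 2 ^ Nk k by rewrite expn_gt0.
have hk := off_tot Nk k.
have b1 := gi_bound ht hl; have b0 := gi_bound h0 hl.
rewrite /gbit /bitm /gi.
case: (ltnP n (off Nk k)) => h1.
- have he : Nk k + aa Nk k <= Ntot Nk - n.+1 by rewrite /aa; lia.
  by rewrite !L1.
- have h2 : off Nk k + Nk k <= n by move: hn; rewrite h1 /= -leqNgt.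
  have he : Ntot Nk - n.+1 < aa Nk k by rewrite /aa; lia.
  have he2 : Ntot Nk - n.+1 < Nk k + aa Nk k by lia.
  by rewrite !L2.
Qed.

Lemma gbit_in Nt (Nk : 'I_Nt -> nat) k u t lo n :
  (off Nk k <= n) && (n < off Nk k + Nk k) -> t < 2 ^ Nk k -> lo < 2 ^ aa Nk k ->
  gbit Nk (gi Nk k u t lo) n = bitm (Nk k) t (n - off Nk k).
Proof.
move=> /andP[h1 h2] ht hl; have hk := off_tot Nk k.
have he : Ntot Nk - n.+1 < Nk k + aa Nk k by rewrite /aa; lia.
have he2 : aa Nk k <= Ntot Nk - n.+1 by rewrite /aa; lia.
have he3 : Ntot Nk - n.+1 - aa Nk k = Nk k - (n - off Nk k).+1 by rewrite /aa; lia.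
by rewrite /gbit /bitm /gi L2 // L1 // he3.
Qed.

Local Open Scope ring_scope.

Lemma rect_id (C : numClosedFieldType) (c h a1 a2 a3 a4 : C) :
  a1 - a2 = a4 - a3 -> 'Re ((a1 - a2) * (a3 - a2)^*) = 0 ->
  `|c - h*a1|^+2 + `|c - h*a3|^+2 = `|c - h*a2|^+2 + `|c - h*a4|^+2.
Proof.
move=> e1 hre.
have e4 : a4 = a1 - a2 + a3 by rewrite e1; ring.
have hz : (a1 - a2) * (a3^* - a2^*) + (a1^* - a2^*) * (a3 - a2) = 0.
  move: hre; rewrite ReE => /eqP; rewrite mulf_eq0 invr_eq0 => /orP[/eqP|]; last by rewrite pnatr_eq0.
  move=> H; rewrite -[RHS]H !rmorphM !rmorphB /= !conjCK. ring.
rewrite e4 !normCK !rmorphB !rmorphM ?rmorphD ?rmorphB /=.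
apply/eqP; rewrite -subr_eq0; apply/eqP.
transitivity (- (h * h^*) * ((a1 - a2) * (a3^* - a2^*) + (a1^* - a2^*) * (a3 - a2))).
  ring.
by rewrite hz mulr0.
Qed.

Lemma sum_mul (V : nmodType) (G : nat -> V) m n N : N = (m * n)%N ->
  \sum_(0 <= i < N) G i = \sum_(0 <= x < m) \sum_(0 <= y < n) G (x * n + y)%N.
Proof.
move=> ->; rewrite big_nat_mul; apply: eq_bigr => x _.
rewrite -{1}(add0n (x * n)%N) big_addn mulSn addnK.
by apply: eq_bigr => y _; rewrite addnC.
Qed.

Lemma count_sign (C : pzRingType) (T : Type) (p : pred T) (s : seq T) :
  (-1 : C) ^+ count p s = \prod_(j <- s) (-1) ^+ (p j : nat).
Proof.
elim: s => [|x s IH]; first by rewrite big_nil.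
by rewrite big_cons /= exprD IH.
Qed.

Lemma prod_sq1 (T : finType) (C : comPzRingType) (f : T -> C) (A B : pred T) :
  (forall x, f x ^+ 2 = 1) ->
  \prod_(x | A x) f x * \prod_(x | B x) f x =
  \prod_(x | A x && ~~ B x) f x * \prod_(x | B x && ~~ A x) f x.
Proof.
move=> hf; rewrite (bigID B A) (bigID A B) /=.
have -> : \prod_(x | B x && A x) f x = \prod_(x | A x && B x) f x.
  by apply: eq_bigl => x; rewrite andbC.
rewrite mulrACA.
by rewrite -big_split /= big1 ?mul1r // => x _; rewrite -expr2 hf.
Qed.


Lemma prod_swap (T : finType) (C : comPzRingType) (f f0 : T -> C) (A B : pred T) :
  (forall x, f x ^+ 2 = 1) -> (forall x, f0 x ^+ 2 = 1) ->
  (forall x, ~~ (A x && B x) -> A x || B x -> f x = f0 x) ->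
  \prod_(x | A x) f x * \prod_(x | B x) f x = \prod_(x | A x) f0 x * \prod_(x | B x) f0 x.
Proof.
move=> hf hf0 he; rewrite (prod_sq1 _ _ hf) (prod_sq1 _ _ hf0).
congr (_ * _); apply: eq_bigr => x /andP[h1 h2].
- apply: he; first by rewrite h1 h2.
  by rewrite h1.
- apply: he; first by rewrite h1 andbT.
  by rewrite h1 orbT.
Qed.

Lemma inS_ord Nt (Nk : 'I_Nt -> nat) (S : {set 'I_(Ntot Nk)}) (n : 'I_(Ntot Nk)) :
  inS S n = (n \in S).
Proof.
apply/existsP/idP => [[m /andP[hm /eqP e]]|hn]; last by exists n; rewrite hn eqxx.
by have -> : n = m by apply: val_inj.
Qed.

Lemma bitm0 m n : bitm m 0 n = false.
Proof. by rewrite /bitm div0n. Qed.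

Lemma prod_block (C : comPzRingType) (F : nat -> C) N a b : (a + b <= N)%N ->
  \prod_(n < N | (a <= n)%N && (n < a + b)%N) F n = \prod_(0 <= j < b) F (j + a)%N.
Proof.
move=> hN; rewrite -(big_mkord (fun n => (a <= n)%N && (n < a + b)%N)).
have -> : \prod_(0 <= j < b) F (j + a)%N = \prod_(a <= n < a + b) F n.
  by symmetry; rewrite (big_addn 0 (a + b) a) addKn.
by rewrite (big_nat_widenl a 0) // (big_nat_widen 0 (a + b) N).
Qed.

Lemma sign_lemma Nt (Nk : 'I_Nt -> nat) (C : comPzRingType) (S : {set 'I_(Ntot Nk)}) k u lo t :
  (t < 2 ^ Nk k)%N -> (lo < 2 ^ aa Nk k)%N -> Pk S k t ->
  \prod_(n in S) (-1 : C) ^+ (1 - gbit Nk (gi Nk k u t lo) n) * (-1) ^+ nzeros (Nk k) t =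
  \prod_(n in S) (-1 : C) ^+ (1 - gbit Nk (gi Nk k u 0 lo) n) * (-1) ^+ nzeros (Nk k) 0.
Proof.
move=> ht hl hPk.
have hk := off_tot Nk k.
have h0 : (0 < 2 ^ Nk k)%N by rewrite expn_gt0.
have he : forall t, (t < 2 ^ Nk k)%N -> (-1 : C) ^+ nzeros (Nk k) t =
    \prod_(n < Ntot Nk | (off Nk k <= n)%N && (n < off Nk k + Nk k)%N)
       (-1 : C) ^+ (1 - gbit Nk (gi Nk k u t lo) n).
  move=> t' ht'; rewrite (prod_block (fun n => (-1 : C) ^+ (1 - gbit Nk (gi Nk k u t' lo) n))) //.
  rewrite /nzeros count_sign -{1}(subn0 (Nk k)) -/(index_iota 0 (Nk k)).
  rewrite big_seq [RHS]big_seq; apply: eq_bigr => j; rewrite mem_index_iota => /andP[_ hj].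
  rewrite gbit_in //; last by apply/andP; split; lia.
  by rewrite addnK; case: bitm.
rewrite !he //.
apply: prod_swap => [x|x|x]; rewrite ?sqrr_sign //.
case hB : ((off Nk k <= x)%N && (x < off Nk k + Nk k)%N); last first.
  by move=> _ _; rewrite (@gbit_out _ Nk k u t lo x (ltn_ord x)) ?hB.
rewrite andbT orbT => hS _.
rewrite !gbit_in // bitm0.
move/andP: hB => [hb1 hb2].
have hj : (x - off Nk k < Nk k)%N by lia.
have hb : ~~ bitm (Nk k) t (x - off Nk k).
  move/forallP: hPk => /(_ (Ordinal hj)) /implyP /=; apply.
  by rewrite subnKC // inS_ord.
by rewrite (negbTE hb).
Qed.

Lemma P_split Nt (Nk : 'I_Nt -> nat) (S : {set 'I_(Ntot Nk)}) k u lo t :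
  (t < 2 ^ Nk k)%N -> (lo < 2 ^ aa Nk k)%N ->
  [forall n : 'I_(Ntot Nk), (n \notin S) ==> ~~ gbit Nk (gi Nk k u t lo) n] =
  [forall n : 'I_(Ntot Nk), (n \notin S) ==> ~~ gbit Nk (gi Nk k u 0 lo) n] && Pk S k t.
Proof.
move=> ht hl; have h0 : (0 < 2 ^ Nk k)%N by rewrite expn_gt0.
have hk := off_tot Nk k.
apply/forallP/andP => [H|[/forallP H0 /forallP Hk] n].
- split.
  + apply/forallP => n; apply/implyP => hn.
    case hB : ((off Nk k <= n)%N && (n < off Nk k + Nk k)%N).
      by rewrite gbit_in // bitm0.
    rewrite -(@gbit_out _ Nk k u t lo n (ltn_ord n)) ?hB //.
    exact: (implyP (H n) hn).
  + apply/forallP => j; apply/implyP => hj.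
    have hjN := ltn_ord j.
    have hn : (off Nk k + j < Ntot Nk)%N by lia.
    have := implyP (H (Ordinal hn)); rewrite -inS_ord /= => /(_ hj).
    rewrite gbit_in /= ?addKn //; apply/andP; split; lia.
- apply/implyP => hn.
  case hB : ((off Nk k <= n)%N && (n < off Nk k + Nk k)%N).
    rewrite gbit_in //.
    move/andP: hB => [hb1 hb2].
    have hj : (n - off Nk k < Nk k)%N by lia.
    apply: (implyP (Hk (Ordinal hj))) => /=.
    by rewrite subnKC // inS_ord.
  rewrite (@gbit_out _ Nk k u t lo n (ltn_ord n)) ?hB //.
  exact: (implyP (H0 n) hn).
Qed.

Lemma inner (R : realType) (Nr Nt : nat) (Nk : 'I_Nt -> nat)
  (A : 'I_Nt -> nat -> R[i]) (S : {set 'I_(Ntot Nk)}) k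
  (rects : seq (nat * nat * nat * nat)) (y : 'I_Nr -> R[i]) (H : 'M[R[i]]_(Nr, Nt)) l u lo :
  perm_eq (flatten (map quad_verts rects)) (Plist S k) ->
  (forall q, q \in rects ->
          let: (t1, t2, t3, t4) := q in
          [/\ is_rectangle (A k t1) (A k t2) (A k t3) (A k t4),
              odd (nzeros (Nk k) t1), odd (nzeros (Nk k) t3),
              ~~ odd (nzeros (Nk k) t2) & ~~ odd (nzeros (Nk k) t4)]) ->
  (lo < 2 ^ aa Nk k)%N ->
  \sum_(0 <= t < 2 ^ Nk k)
     (if [forall n : 'I_(Ntot Nk), (n \notin S) ==> ~~ gbit Nk (gi Nk k u t lo) n]
      then dli Nk A y H l (gi Nk k u t lo) *
           \prod_(n in S) (-1) ^+ (1 - gbit Nk (gi Nk k u t lo) n)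
      else 0) = 0.
Proof.
move=> hperm hq hl.
have h0 : (0 < 2 ^ Nk k)%N by rewrite expn_gt0.
case hP0 : [forall n : 'I_(Ntot Nk), (n \notin S) ==> ~~ gbit Nk (gi Nk k u 0 lo) n];
  last first.
  rewrite big_seq; apply: big1 => t; rewrite mem_index_iota => /andP[_ ht].
  by rewrite P_split // hP0.
set K := \prod_(n in S) (-1) ^+ (1 - gbit Nk (gi Nk k u 0 lo) n) * (-1) ^+ nzeros (Nk k) 0
  : R[i].
set c := y l - \sum_(k' < Nt | k' != k) H l k' * A k' (loc Nk k' (gi Nk k u 0 lo)).
transitivity (\sum_(t <- Plist S k) K * ((-1) ^+ nzeros (Nk k) t * `|c - H l k * A k t| ^+ 2)).
  rewrite /Plist big_filter [RHS]big_mkcond /index_iota subn0.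
  rewrite big_seq [RHS]big_seq; apply: eq_bigr => t; rewrite mem_iota add0n => /andP[_ ht].
  rewrite P_split // hP0 /=; case hPk : (Pk S k t) => //.
  have hs := sign_lemma R[i] u ht hl hPk; rewrite -/K in hs.
  have hsig : \prod_(n in S) (-1) ^+ (1 - gbit Nk (gi Nk k u t lo) n) =
      K * (-1) ^+ nzeros (Nk k) t :> R[i].
    by rewrite -hs -mulrA -expr2 sqrr_sign mulr1.
  have hd : dli Nk A y H l (gi Nk k u t lo) = `|c - H l k * A k t| ^+ 2.
    rewrite /dli (bigD1 k) //= loc_self //.
    have -> : \sum_(k' < Nt | k' != k) H l k' * A k' (loc Nk k' (gi Nk k u t lo)) =
              \sum_(k' < Nt | k' != k) H l k' * A k' (loc Nk k' (gi Nk k u 0 lo)).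
      by apply: eq_bigr => k' hk'; rewrite loc_other.
    rewrite /c; congr (`|_| ^+ 2); ring.
  rewrite hsig hd; ring.
rewrite -big_distrr /= -(perm_big _ hperm) big_flatten big_map /=.
rewrite big_seq big1 ?mulr0 // => q hqin.
move: (hq q hqin); case: q hqin => [[[t1 t2] t3] t4] _ [[hr1 hr2] ho1 ho3 he2 he4].
rewrite /quad_verts !big_cons big_nil.
rewrite -!(signr_odd _ (nzeros _ _)) ho1 ho3 (negbTE he2) (negbTE he4) /= expr0 expr1.
have hid := @rect_id _ c (H l k) _ _ _ _ hr1 hr2.
transitivity ((`|c - H l k * A k t2| ^+ 2 + `|c - H l k * A k t4| ^+ 2) -
              (`|c - H l k * A k t1| ^+ 2 + `|c - H l k * A k t3| ^+ 2)).
  ring.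
by rewrite hid subrr.
Qed.

Theorem proposition3 (R : realType) (Nr Nt : nat) (Nk : 'I_Nt -> nat)
  (A : 'I_Nt -> nat -> R[i]) (S : {set 'I_(Ntot Nk)}) :
  (exists k : 'I_Nt, @rect_cond Nt Nk R A S k) ->
  forall (y : 'I_Nr -> R[i]) (H : 'M[R[i]]_(Nr, Nt)), @dbar Nt Nk R A Nr y H S = 0.
Proof.
move=> [k [rects [hperm _ hq]]] y H; rewrite /dbar; apply: big1 => l _.
have hk := off_tot Nk k.
pose G := fun i : nat => (if [forall n : 'I_(Ntot Nk), (n \notin S) ==> ~~ gbit Nk i n]
  then dli Nk A y H l i * \prod_(n in S) (-1) ^+ (1 - gbit Nk i n) else 0) : R[i].
rewrite big_mkcond; change (\sum_(i < 2 ^ Ntot Nk) G i = 0); rewrite -(big_mkord xpredT G).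
rewrite (@sum_mul _ _ (2 ^ off Nk k) (2 ^ (Nk k + aa Nk k))); last first.
  rewrite -expnD; congr (expn 2 _); rewrite /aa; lia.
apply: big1 => u _.
rewrite (@sum_mul _ _ (2 ^ Nk k) (2 ^ aa Nk k)); last by rewrite expnD.
rewrite exchange_big_nat big_seq; apply: big1 => lo; rewrite mem_index_iota => /andP[_ hlo].
exact: (inner _ _ _ _ hperm hq hlo).
Qed.
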